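(* For every bisection $\mathcal{S}=(S,\overline{S})$ and every vertex $u$, a $u$-pair for $\mathcal{S}$ exists if and only if $u$ is non-stubborn.
   Context: $G$ is a finite simple undirected graph with an odd number $n$ of vertices; $N(u)$ is the set of neighbors of $u$, $d(u)=|N(u)|$, and $\overline{N}(u)$ the set of vertices other than $u$ not adjacent to $u$. Each vertex $x$ has stubbornness $\alpha_x\in(0,1)$ and $a_x=\lfloor\alpha_x/(1-\alpha_x)\rfloor$. A vertex $x$ is stubborn if $a_x\ge\min\{d(x),n-d(x)-1\}$, non-stubborn otherwise. $W(A,B)$ is the number of edges with one endpoint in $A$ and the other in $B$. A bisection $(S,\overline{S})$ partitions the vertices with $|S|=\frac{n+1}{2}$, $|\overline{S}|=\frac{n-1}{2}$. Deficiency: $\mathrm{def}_{\mathcal{S}}(x)=W(x,S)-W(x,\overline{S})$ for $x\in S$, $W(x,\overline{S})-W(x,S)$ for $x\in\overline{S}$. Rank: $\mathrm{rank}_{\mathcal{S}}(u)=\lceil (a_u+1-\mathrm{def}_{\mathcal{S}}(u))/2\rceil$. A $u$-pair for $\mathcal{S}$ is a pair of sets $(A_u,B_u)$ with: if $u\in S$, $A_u\subseteq S\cap\overline{N}(u)$, $B_u\subseteq\overline{S}\cap N(u)$, $|A_u|=|B_u|=\mathrm{rank}_{\mathcal{S}}(u)$; if $u\in\overline{S}$, $A_u\subseteq S\cap N(u)$, $B_u\subseteq\overline{S}\cap\overline{N}(u)$, $|A_u|=\mathrm{rank}_{\mathcal{S}}(u)$, $|B_u|=\mathrm{rank}_{\mathcal{S}}(u)-1$.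 *)

(* Defs.v *)
From mathcomp Require Import all_boot all_order all_algebra.
From mathcomp Require Import reals.
Set Implicit Arguments. Unset Strict Implicit. Unset Printing Implicit Defensive.
Import Order.TTheory GRing.Theory Num.Theory.
Local Open Scope ring_scope.

(* A finite simple graph on the vertex type T is given by a symmetric,
   irreflexive relation e : rel T; n = #|T|. *)
Section Defs.
Variables (R : realType) (T : finType) (e : rel T) (alpha : T -> R).

Definition nbhd (u : T) : {set T} := [set v | e u v].
Definition nonnbhd (u : T) : {set T} := [set v | (v != u) && ~~ e u v].
Definition deg (u : T) : nat := #|nbhd u|.
Definition Wv (x : T) (A : {set T}) : nat := #|[set y in A | e x y]|.

Definition aval (x : T) : int := Num.floor (alpha x / (1 - alpha x)).

Definition stubborn (x : T) : bool :=
  Num.min ((deg x)%:Z) (#|T|%:Z - (deg x)%:Z - 1) <= aval x.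

Definition bisection (S : {set T}) : bool := #|S| == (#|T|.+1)./2.

Definition deficiency (S : {set T}) (x : T) : int :=
  if x \in S then (Wv x S)%:Z - (Wv x (~: S))%:Z
  else (Wv x (~: S))%:Z - (Wv x S)%:Z.

Definition rank (S : {set T}) (u : T) : int :=
  Num.ceil (((aval u + 1 - deficiency S u)%:~R : R) / 2).

(* u-pair (A, B) for (S, ~: S).  Set sizes prescribed to be a possibly
   negative integer r are read as max(r, 0). *)
Definition upair (S : {set T}) (u : T) (A B : {set T}) : Prop :=
  if u \in S then
    [/\ A \subset S :&: nonnbhd u, B \subset (~: S) :&: nbhd u,
        #|A|%:Z = Num.max 0 (rank S u) & #|B|%:Z = Num.max 0 (rank S u)]
  else
    [/\ A \subset S :&: nbhd u, B \subset (~: S) :&: nonnbhd u,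
        #|A|%:Z = Num.max 0 (rank S u) & #|B|%:Z = Num.max 0 (rank S u - 1)].
End Defs.

(* Main.v *)
Require Import Defs.
From mathcomp Require Import all_boot all_order all_algebra.
From mathcomp Require Import reals zify.
Import Order.TTheory GRing.Theory Num.Theory.
Local Open Scope ring_scope.

Lemma sub_card (T : finType) (X : {set T}) (k : nat) :
  (k <= #|X|)%N -> exists A : {set T}, A \subset X /\ #|A| = k.
Proof.
elim: k => [|k IH] hk; first by exists set0; rewrite sub0set cards0.
have [A [sAX cA]] := IH (ltnW hk).
have : (0 < #|X :\: A|)%N by rewrite cardsD (setIidPr sAX) cA subn_gt0.
case/card_gt0P => x; rewrite inE => /andP [xA xX].
exists (x |: A); split; first by rewrite subUset sub1set xX.
by rewrite cardsU1 xA cA.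
Qed.

Lemma card_split (T : finType) (e : rel T) (e_irr : irreflexive e) (u : T) (X : {set T}) :
  (#|X :&: nbhd e u| + #|X :&: nonnbhd e u| + (u \in X) = #|X|)%N.
Proof.
rewrite -(cardsID (nbhd e u) X) -addnA; congr (_ + _)%N.
rewrite (cardsD1 u (X :\: nbhd e u)) addnC.
have -> : X :\: nbhd e u :\ u = X :&: nonnbhd e u.
  by apply/setP => v; rewrite !inE; case: (v \in X); rewrite ?andbF ?andbT.
by rewrite !inE e_irr.
Qed.

Lemma deg_split (T : finType) (e : rel T) (u : T) (S : {set T}) :
  (deg e u = Wv e u S + Wv e u (~: S))%N.
Proof.
rewrite /deg -(cardsID S (nbhd e u)) /Wv; congr (_ + _)%N; apply: eq_card => v; rewrite !inE //.
by rewrite andbC.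
Qed.

Lemma W_eq (T : finType) (e : rel T) (u : T) (X : {set T}) :
  Wv e u X = #|X :&: nbhd e u|.
Proof. by apply: eq_card => v; rewrite !inE. Qed.

Lemma rank_le (R : realType) (T : finType) (e : rel T) (alpha : T -> R) S u (m : int) :
  (rank e alpha S u <= m) = (aval alpha u + 1 - deficiency e S u <= 2 * m).
Proof.
rewrite /rank ceil_le_int ler_pdivrMr // -[2 : R]/(2%:~R) -intrM ler_int mulrC.
by [].
Qed.

Theorem lemma4 (R : realType) (T : finType) (e : rel T)
  (e_sym : symmetric e) (e_irr : irreflexive e) (n_odd : odd #|T|)
  (alpha : T -> R) (alpha_range : forall x, 0 < alpha x < 1)
  (S : {set T}) (hS : bisection S) (u : T) :
  (exists A B : {set T}, upair e alpha S u A B) <-> ~~ stubborn e alpha u.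
Proof.
have hs : (#|S|.*2 = #|T|.+1)%N.
  move: hS; rewrite /bisection => /eqP ->.
  by rewrite -{2}(odd_double_half #|T|.+1) /= n_odd.
have hC : (#|~: S| + #|S| = #|T|)%N by rewrite cardsCs setCK subnK // max_card.
have hd := @deg_split T e u S.
have h1 := @card_split T e e_irr u S.
have h2 := @card_split T e e_irr u (~: S).
rewrite !(@W_eq T e) in hd.
set p := #|S :&: nbhd e u| in hd h1.
set q := #|~: S :&: nbhd e u| in hd h2.
set r := rank e alpha S u.
have hr := @rank_le R T e alpha S u.
rewrite -/r in hr.
have hstub : ~~ stubborn e alpha u =
   ((aval alpha u < (deg e u)%:Z) && (aval alpha u < #|T|%:Z - (deg e u)%:Z - 1)).
  by rewrite /stubborn ge_min negb_or -!ltNge.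
rewrite hstub hd.
have hmax : forall c : nat, (Num.max 0 r <= c%:Z) = (r <= c%:Z).
  by move=> c; rewrite ge_max le0z_nat.
have hex : forall (X : {set T}), (r <= #|X|%:Z) -> exists A : {set T}, A \subset X /\ #|A|%:Z = Num.max 0 r.
  move=> X hX.
  have hk : (absz (Num.max 0%R r) <= #|X|)%N.
    by rewrite -lez_nat gez0_abs ?le_max ?lexx // hmax.
  have [A [sA cA]] := @sub_card T X _ hk.
  by exists A; split => //; rewrite cA gez0_abs // le_max lexx.
have hex1 : forall (X : {set T}), (r - 1 <= #|X|%:Z) -> exists A : {set T}, A \subset X /\ #|A|%:Z = Num.max 0 (r - 1).
  move=> X hX.
  have hk : (absz (Num.max 0%R (r - 1)%R) <= #|X|)%N.
    by rewrite -lez_nat gez0_abs ?le_max ?lexx // ge_max le0z_nat.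
  have [A [sA cA]] := @sub_card T X _ hk.
  by exists A; split => //; rewrite cA gez0_abs // le_max lexx.
rewrite /upair /deficiency in hr *.
case uS: (u \in S); rewrite uS /= in h1; rewrite inE uS /= in h2.
all: rewrite -/r.
- have {}hr : forall m, (r <= m) = (aval alpha u + 1 - (p%:Z - q%:Z) <= 2 * m).
    by move=> m; rewrite hr uS !(@W_eq T e).
  split.
  + move=> [A [B [sA sB cA cB]]].
    have lA := subset_leq_card sA; have lB := subset_leq_card sB.
    have rA : r <= #|A|%:Z by rewrite cA le_max lexx orbT.
    have rB : r <= #|B|%:Z by rewrite cB le_max lexx orbT.
    move: (hr #|A|%:Z) (hr #|B|%:Z); rewrite rA rB => hA hB.
    move: hA hB lA lB h1 h2 hs hC; lia.
  + move=> /andP [ha hb].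
    have hA : r <= #|S :&: nonnbhd e u|%:Z.
      rewrite hr; move: ha hb h1 h2 hs hC; lia.
    have [A [sA cA]] := hex _ hA.
    have hB : r <= #|~: S :&: nbhd e u|%:Z.
      rewrite hr; move: ha hb h1 h2 hs hC; lia.
    have [B [sB cB]] := hex _ hB.
    by exists A, B.
- have {}hr : forall m, (r <= m) = (aval alpha u + 1 - (q%:Z - p%:Z) <= 2 * m).
    by move=> m; rewrite hr uS !(@W_eq T e).
  split.
  + move=> [A [B [sA sB cA cB]]].
    have lA := subset_leq_card sA; have lB := subset_leq_card sB.
    have rA : r <= #|A|%:Z by rewrite cA le_max lexx orbT.
    have rB : r - 1 <= #|B|%:Z by rewrite cB le_max lexx orbT.
    have rB' : r <= #|B|%:Z + 1 by rewrite -lerBlDr.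
    move: (hr #|A|%:Z) (hr (#|B|%:Z + 1)); rewrite rA rB' => hA hB.
    move: hA hB lA lB h1 h2 hs hC; lia.
  + move=> /andP [ha hb].
    have hA : r <= #|S :&: nbhd e u|%:Z.
      rewrite hr; move: ha hb h1 h2 hs hC; lia.
    have [A [sA cA]] := hex _ hA.
    have hB : r - 1 <= #|~: S :&: nonnbhd e u|%:Z.
      rewrite lerBlDr hr; move: ha hb h1 h2 hs hC; lia.
    have [B [sB cB]] := hex1 _ hB.
    by exists A, B.
Qed.
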